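(* Let $n,m\ge 1$, let $c_1,\dots,c_n>0$, $T>0$, $\epsilon>0$, let $r_1,\dots,r_m>0$, and let $\kappa_{ij}\ge 0$ ($i=1,\dots,m$, $j=1,\dots,n$). For $j=1,\dots,n$ define $\beta_j:\mathbb{R}\to\mathbb{R}$ by $\beta_j(q_j)=0$ if $q_j\le c_j$ and $\beta_j(q_j)=q_j-c_j-c_j\log(q_j/c_j)$ if $q_j>c_j$. Consider the optimization problem in the variables $X=(x_{ij})\in\mathbb{R}^{m\times n}$ and $q=(q_j)\in\mathbb{R}^n$: $$\min\ C(X,q):=\sum_{i,j}\kappa_{ij}x_{ij}+\sum_j\beta_j(q_j)+\epsilon\sum_{i,j}x_{ij}\log\Big(\frac{x_{ij}}{r_i}\Big)$$ subject to $x_{ij}\ge 0$ for all $i,j$; $\sum_j x_{ij}=r_i$ for all $i$; and $\sum_i x_{ij}=q_j/T$ for all $j$. Then this problem is feasible and has a unique optimal point $(X^*,q^* )$.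
   Context: The convention $0\log 0=0$ is used in the entropy term. Interpretation: $j$ indexes EV charging stations with capacities $c_j$, $i$ indexes demand locations with request rates $r_i$, $\kappa_{ij}$ are travel times, $T$ is the mean sojourn time. *)

(* Defs.v *)
From mathcomp Require Import all_boot all_order all_algebra.
From mathcomp Require Import all_classical all_reals all_analysis.
Set Implicit Arguments. Unset Strict Implicit. Unset Printing Implicit Defensive.
Import Order.TTheory GRing.Theory Num.Theory.
Local Open Scope ring_scope.

Definition beta {R : realType} (c qj : R) : R :=
  if qj <= c then 0 else qj - c - c * ln (qj / c).

Definition xlog {R : realType} (x r : R) : R :=
  if x == 0 then 0 else x * ln (x / r).

Definition cost {R : realType} (m n : nat) (kappa : 'I_m -> 'I_n -> R)
  (c : 'I_n -> R) (r : 'I_m -> R) (eps : R)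
  (X : 'M[R]_(m, n)) (q : 'rV[R]_n) : R :=
  \sum_(i < m) \sum_(j < n) kappa i j * X i j
  + \sum_(j < n) beta (c j) (q 0 j)
  + eps * \sum_(i < m) \sum_(j < n) xlog (X i j) (r i).

Definition feasible {R : realType} (m n : nat) (r : 'I_m -> R) (T : R)
  (X : 'M[R]_(m, n)) (q : 'rV[R]_n) : Prop :=
  (forall i j, 0 <= X i j) /\
  (forall i, \sum_(j < n) X i j = r i) /\
  (forall j, \sum_(i < m) X i j = q 0 j / T).

Definition optimal {R : realType} (m n : nat) (kappa : 'I_m -> 'I_n -> R)
  (c : 'I_n -> R) (r : 'I_m -> R) (T eps : R)
  (X : 'M[R]_(m, n)) (q : 'rV[R]_n) : Prop :=
  feasible r T X q /\
  (forall Y p, feasible r T Y p ->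
     cost kappa c r eps X q <= cost kappa c r eps Y p).

(* Main.v *)
Require Import Defs.
From mathcomp Require Import all_boot all_order all_algebra.
From mathcomp Require Import all_classical all_reals all_analysis.
From mathcomp Require Import ring lra.
Import Order.TTheory GRing.Theory Num.Theory.
Import numFieldTopology.Exports numFieldNormedType.Exports.
Set Implicit Arguments. Unset Strict Implicit. Unset Printing Implicit Defensive.
Local Open Scope ring_scope.

Section RealLemmas.
Variable R : realType.
Implicit Types x y z a b c r : R.

Lemma ln_le_sub1 z : 0 < z -> ln z <= z - 1.
Proof.
move=> z0; have := expR_ge1Dx (ln z); rewrite lnK ?posrE // => h; lra.
Qed.

Lemma ln_lt_sub1 z : 0 < z -> z != 1 -> ln z < z - 1.
Proof.
move=> z0 z1; have : ln z != 0 by rewrite ln_eq0.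
move/expR_gt1Dx; rewrite lnK ?posrE // => h; lra.
Qed.

Lemma xlogE x r : xlog x r = x * ln (x / r).
Proof. by rewrite /xlog; case: eqP => [->|]; rewrite ?mul0r. Qed.

Lemma xlog_tangent x y r : 0 < r -> 0 < y -> 0 <= x -> x != y ->
  y * ln (y / r) + (ln (y / r) + 1) * (x - y) < xlog x r.
Proof.
move=> r0 y0 x0 xy; rewrite xlogE.
have [->|xp] := eqVneq x 0.
  rewrite mul0r; have -> : y * ln (y / r) + (ln (y / r) + 1) * (0 - y) = - y by ring.
  lra.
have xpos : 0 < x by rewrite lt0r xp.
rewrite !ln_div ?posrE //.
have h := ln_lt_sub1 (divr_gt0 y0 xpos).
have yx1 : y / x != 1.
  apply/negP => /eqP h1; move/eqP: xy; apply.
  by move: h1 => /(congr1 (fun t => t * x)); rewrite mulfVK ?mul1r // => ->.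
have {h} := h yx1; rewrite ln_div ?posrE // => h.
have h2 : x * (ln y - ln x) < x * (y / x - 1) by rewrite ltr_pM2l.
have e : x * (y / x - 1) = y - x by field; rewrite lt0r_neq0.
rewrite e in h2; lra.
Qed.

Lemma beta_tangent c x y : 0 < c ->
  beta c y + (if y <= c then 0 else 1 - c / y) * (x - y) <= beta c x.
Proof.
move=> c0; rewrite /beta.
have [yc|yc] := leP y c.
  rewrite mul0r addr0; have [//|xc] := leP x c.
  have xpos : 0 < x by lra.
  have := ln_le_sub1 (divr_gt0 xpos c0).
  have -> : x / c - 1 = (x - c) / c by field; rewrite lt0r_neq0.
  move=> h; have h2 : c * ln (x / c) <= c * ((x - c) / c) by rewrite ler_pM2l.
  have e : c * ((x - c) / c) = x - c by field; rewrite lt0r_neq0.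
  rewrite e in h2.
  lra.
have ypos : 0 < y by lra.
have [xc|xc] := leP x c.
  have := ln_le_sub1 (divr_gt0 c0 ypos).
  rewrite !ln_div ?posrE // => h.
  have h2 : c * (ln c - ln y) <= c * (c / y - 1) by rewrite ler_pM2l.
  have h3 : 0 < 1 - c / y by rewrite subr_gt0 ltr_pdivrMr // mul1r.
  have h4 : (1 - c / y) * x <= (1 - c / y) * c by rewrite ler_pM2l.
  have e : c * (c / y - 1) = - (c * (1 - c / y)) by ring.
  have e2 : (1 - c / y) * (x - y) = (1 - c / y) * x - y + c by field; rewrite lt0r_neq0.
  rewrite e in h2; rewrite e2; lra.
have xpos : 0 < x by lra.
have := ln_le_sub1 (divr_gt0 xpos ypos).
rewrite !ln_div ?posrE // => h.
have h2 : c * (ln x - ln y) <= c * (x / y - 1) by rewrite ler_pM2l.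
have e : c * (x / y - 1) = c * x / y - c by field; rewrite lt0r_neq0.
have e2 : (1 - c / y) * (x - y) = x - y - c * x / y + c by field; rewrite lt0r_neq0.
rewrite e in h2; rewrite e2; lra.
Qed.

Lemma beta_mid c a b : 0 < c ->
  2 * beta c ((a + b) / 2) <= beta c a + beta c b.
Proof.
move=> c0; have ha := beta_tangent a ((a + b) / 2) c0.
have hb := beta_tangent b ((a + b) / 2) c0.
set d := (if _ <= c then _ else _) in ha hb.
have e : d * (a - (a + b) / 2) + d * (b - (a + b) / 2) = 0 by field.
lra.
Qed.

Lemma xlog_mid_lt a b r : 0 < r -> 0 <= a -> 0 <= b -> a != b ->
  2 * xlog ((a + b) / 2) r < xlog a r + xlog b r.
Proof.
move=> r0 a0 b0 ab.
have ypos : 0 < (a + b) / 2.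
  have : 0 < a + b.
    rewrite lt_neqAle addr_ge0 // andbT eq_sym; apply/negP => /eqP s0.
    have a00 : a = 0 by lra.
    have b00 : b = 0 by lra.
    by move/eqP: ab; apply; rewrite a00 b00.
  lra.
have ay : a != (a + b) / 2.
  apply/negP => /eqP e; move/eqP: ab; apply; lra.
have by_ : b != (a + b) / 2.
  apply/negP => /eqP e; move/eqP: ab; apply; lra.
have ha := xlog_tangent r0 ypos a0 ay.
have hb := xlog_tangent r0 ypos b0 by_.
rewrite (xlogE ((a + b) / 2)).
set L := ln _ in ha hb *.
set y := (a + b) / 2 in ha hb *.
have e : (L + 1) * (a - y) + (L + 1) * (b - y) = 0 by rewrite /y; field.
lra.
Qed.

Lemma xlog_mid a b r : 0 < r -> 0 <= a -> 0 <= b ->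
  2 * xlog ((a + b) / 2) r <= xlog a r + xlog b r.
Proof.
move=> r0 a0 b0; have [->|ab] := eqVneq a b.
  have -> : (b + b) / 2 = b by field. lra.
exact/ltW/xlog_mid_lt.
Qed.


Lemma xlog_cont r : 0 < r -> continuous (fun x => xlog x r).
Proof.
move=> r0 x0.
have E : (fun x => xlog x r) = (fun x => x * ln (x / r)).
  by apply: funext => x; exact: xlogE.
rewrite E /prop_for /continuous_at /=.
have neg y : y <= 0 -> ln (y / r) = 0.
  move=> y0; apply: ln0; rewrite ler_pdivrMr // mul0r //.
have [x0n|x0p|->] := ltgtP x0 0.
- rewrite neg ?mulr0 ?ltW //; apply: cvg_near_cst.
  by apply: filterS (lt_nbhsl x0n) => y y0; rewrite neg ?mulr0 // ltW.
- apply: cvgM; first exact: cvg_id.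
  have c1 : {for x0, continuous (fun x => x / r)}.
    by apply: cvgM; [exact: cvg_id | exact: cvg_cst].
  have c2 : {for x0 / r, continuous (@ln R)} by apply: continuous_ln; rewrite divr_gt0.
  exact: (continuous_comp c1 c2).
- rewrite mul0r; apply/cvgrPdist_lt => e e0.
  have d0 : 0 < e ^+ 2 / (4 * r) by rewrite divr_gt0 ?exprn_gt0 ?mulr_gt0.
  have h1 := lt_nbhsl r0; have h2 := lt_nbhsl d0.
  near=> y.
  have yr : y < r by near: y; exact: h1.
  have yd : y < e ^+ 2 / (4 * r) by near: y; exact: h2.
  rewrite sub0r normrN.
  have [y0|yp] := leP y 0; first by rewrite neg ?mulr0 ?normr0.
  have lnle : ln (y / r) <= 0 by apply: ln_le0; rewrite ler_pdivrMr // mul1r ltW.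
  rewrite ler0_norm; last exact: mulr_ge0_le0 (ltW yp) lnle.
  set w := Num.sqrt (r / y).
  have w0 : 0 < w by rewrite sqrtr_gt0 divr_gt0.
  have w2 : w * w = r / y by rewrite -expr2 sqr_sqrtr // ltW // divr_gt0.
  have lnw : ln (y / r) = - (ln w + ln w).
    rewrite -lnM ?posrE // w2 !ln_div ?posrE //; ring.
  have lw := ln_sublinear w0.
  have yw : y ^+ 2 * (w * w) = y * r by rewrite w2; field; rewrite gt_eqF.
  have yd' : 4 * r * y < e ^+ 2.
    by rewrite mulrC -ltr_pdivlMr ?mulr_gt0.
  rewrite lnw.
  have a0 : 0 <= 2 * y * w by rewrite !mulr_ge0 // ltW.
  have : (2 * y * w) ^+ 2 < e ^+ 2.
    have -> : (2 * y * w) ^+ 2 = 4 * (y ^+ 2 * (w * w)) by ring.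
    rewrite yw; lra.
  have : y * ln w < y * w by rewrite ltr_pM2l.
  nra.
Unshelve. all: by end_near.
Qed.

Lemma beta_max c q : 0 < c ->
  beta c q = Num.max q c - c - c * ln (Num.max q c / c).
Proof.
move=> c0; rewrite /beta; case: leP => qc.
  by rewrite divff ?gt_eqF // ln1; ring.
by [].
Qed.

Lemma beta_cont c : 0 < c -> continuous (beta c).
Proof.
move=> c0 x0.
have E : beta c = (fun q => Num.max q c - c - c * ln (Num.max q c / c)).
  by apply: funext => q; exact: beta_max.
rewrite E /prop_for /continuous_at /=.
have cm : {for x0, continuous (fun q => Num.max q c)}.
  by apply: (@continuous_max _ _ id (fun=> c)); [exact: cvg_id | exact: cvg_cst].
have mpos : 0 < Num.max x0 c by rewrite lt_max c0 orbT.
apply: cvgB; first by apply: cvgB; [exact: cm | exact: cvg_cst].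
apply: cvgM; first exact: cvg_cst.
have c1 : {for x0, continuous (fun q => Num.max q c / c)}.
  by apply: cvgM; [exact: cm | exact: cvg_cst].
have c2 : {for Num.max x0 c / c, continuous (@ln R)}.
  by apply: continuous_ln; rewrite divr_gt0.
exact: (continuous_comp c1 c2).
Qed.

End RealLemmas.

Section Sums.
Variables (R : realType) (U : topologicalType).

Lemma cont_sum_seq (I : Type) (s : seq I) (f : I -> U -> R) x :
  (forall i, {for x, continuous (f i)}) ->
  {for x, continuous (fun y => \sum_(i <- s) f i y)}.
Proof.
move=> hf; elim: s => [|a s IH].
  rewrite /prop_for /continuous_at /=.
  under eq_fun do rewrite big_nil. rewrite big_nil; exact: cvg_cst.
rewrite /prop_for /continuous_at /=.
under eq_fun do rewrite big_cons. rewrite big_cons.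
by apply: cvgD; [exact: hf | exact: IH].
Qed.

Lemma cont_sum (I : finType) (f : I -> U -> R) x :
  (forall i, {for x, continuous (f i)}) ->
  {for x, continuous (fun y => \sum_(i : I) f i y)}.
Proof. exact: cont_sum_seq. Qed.

Lemma cadd (f g : U -> R) x : {for x, continuous f} -> {for x, continuous g} ->
  {for x, continuous (fun y => f y + g y)}.
Proof. by move=> hf hg; apply: cvgD. Qed.

Lemma cmul (f g : U -> R) x : {for x, continuous f} -> {for x, continuous g} ->
  {for x, continuous (fun y => f y * g y)}.
Proof. by move=> hf hg; apply: cvgM. Qed.

Lemma ccst (a : R) x : {for x, continuous (fun _ : U => a)}.
Proof. exact: cvg_cst. Qed.

End Sums.

Lemma ltr_sum_one (R : realType) (I : finType) (F G : I -> R) i0 :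
  (forall i, F i <= G i) -> F i0 < G i0 -> \sum_i F i < \sum_i G i.
Proof.
move=> h h0; rewrite (bigD1 i0) //= [X in _ < X](bigD1 i0) //=.
by apply: ltr_leD => //; apply: ler_sum => i _; exact: h.
Qed.

Lemma sum_mid (R : realType) (I : finType) (F G H : I -> R) :
  (forall i, 2 * H i <= F i + G i) ->
  2 * \sum_i H i <= \sum_i F i + \sum_i G i.
Proof.
by move=> h; rewrite mulr_sumr -big_split; apply: ler_sum => i _; exact: h.
Qed.

Section Unique.
Variables (R : realType) (m n : nat) (c : 'I_n -> R) (r : 'I_m -> R)
  (kappa : 'I_m -> 'I_n -> R) (Tt eps : R).
Hypotheses (c0 : forall j, 0 < c j) (T0 : 0 < Tt) (e0 : 0 < eps)
  (r0 : forall i, 0 < r i).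

Lemma opt_unique X q Y p :
  optimal kappa c r Tt eps X q -> optimal kappa c r Tt eps Y p -> X = Y /\ q = p.
Proof.
case=> fX oX [fY oY].
have hXY : cost kappa c r eps X q = cost kappa c r eps Y p.
  by apply/le_anti; rewrite oX // oY.
pose Z : 'M[R]_(m, n) := \matrix_(i, j) ((X i j + Y i j) / 2).
pose s : 'rV[R]_n := \row_j ((q 0 j + p 0 j) / 2).
case: fX => [Xp [Xr Xc]]; case: fY => [Yp [Yr Yc]].
have fZ : feasible r Tt Z s.
  split; first by move=> i j; rewrite mxE divr_ge0 ?addr_ge0.
  split.
    move=> i; under eq_bigr do rewrite mxE.
    by rewrite -mulr_suml big_split /= Xr Yr; field.
  move=> j; under eq_bigr do rewrite mxE.
  by rewrite -mulr_suml big_split /= Xc Yc mxE; field; rewrite gt_eqF.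
have hZ := oX Z s fZ.
have XY : X = Y.
  case: (pselect (exists i j, X i j != Y i j)) => [[i0 [j0 h0]]|nex]; last first.
    apply/matrixP => i j; apply/eqP/negPn/negP => h; apply: nex; by exists i, j.
  exfalso.
  have K : 2 * (\sum_i \sum_j kappa i j * Z i j) <=
      \sum_i \sum_j kappa i j * X i j + \sum_i \sum_j kappa i j * Y i j.
    apply: sum_mid => i; apply: sum_mid => j; rewrite mxE.
    suff -> : 2 * (kappa i j * ((X i j + Y i j) / 2)) =
      kappa i j * X i j + kappa i j * Y i j by exact: lexx.
    by field.
  have B : 2 * (\sum_j beta (c j) (s 0 j)) <=
      \sum_j beta (c j) (q 0 j) + \sum_j beta (c j) (p 0 j).
    by apply: sum_mid => j; rewrite mxE; exact: beta_mid.
  have E : 2 * (\sum_i \sum_j xlog (Z i j) (r i)) <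
      \sum_i \sum_j xlog (X i j) (r i) + \sum_i \sum_j xlog (Y i j) (r i).
    rewrite mulr_sumr -big_split /=; apply: (ltr_sum_one (i0:=i0)).
      move=> i; rewrite -big_split /= mulr_sumr; apply: ler_sum => j _.
      by rewrite mxE; apply: xlog_mid.
    rewrite -big_split /= mulr_sumr; apply: (ltr_sum_one (i0:=j0)).
      by move=> j; rewrite mxE; apply: xlog_mid.
    by rewrite mxE; apply: xlog_mid_lt.
  have E' := ltr_pM2l e0 _ _; move: hZ hXY K B E.
  rewrite /cost.
  set a := \sum_i _; set b := \sum_j _; set d := \sum_i _.
  set a1 := \sum_i _; set b1 := \sum_j _; set d1 := \sum_i _.
  set a2 := \sum_i _; set b2 := \sum_j _; set d2 := \sum_i _.
  move=> hZ hXY K B E.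
  have : eps * (2 * a1) < eps * (b1 + d1) by rewrite ltr_pM2l.
  lra.
split => //; rewrite -XY in Yc.
apply/rowP => j.
have h1 : q 0 j = Tt * (q 0 j / Tt) by field; rewrite gt_eqF.
have h2 : p 0 j = Tt * (p 0 j / Tt) by field; rewrite gt_eqF.
by rewrite h1 h2 -Xc -Yc.
Qed.

End Unique.

Local Open Scope classical_set_scope.

Section Exist.
Variables (R : realType) (m n : nat) (c : 'I_n -> R) (r : 'I_m -> R)
  (kappa : 'I_m -> 'I_n -> R) (Tt eps : R).
Hypotheses (n1 : (1 <= n)%N) (c0 : forall j, 0 < c j) (T0 : 0 < Tt)
  (e0 : 0 < eps) (r0 : forall i, 0 < r i).

Local Notation PT := (prod_topology (fun _ : 'I_m * 'I_n => R)).

Definition mat (x : PT) : 'M[R]_(m, n) := \matrix_(i, j) x (i, j).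
Definition qrow (X : 'M[R]_(m, n)) : 'rV[R]_n := \row_j (Tt * \sum_i X i j).
Definition FF (x : PT) : R := cost kappa c r eps (mat x) (qrow (mat x)).
Definition SS : set PT :=
  [set x | (forall k, 0 <= x k) /\ (forall i, \sum_j x (i, j) = r i)].

Lemma projc (k : 'I_m * 'I_n) : continuous (fun x : PT => x k).
Proof. exact: (@proj_continuous _ (fun _ : 'I_m * 'I_n => R) k). Qed.

Lemma boxc (M : R) : compact [set x : PT | forall k, `[0, M]%classic (x k)].
Proof.
exact: (@tychonoff _ (fun _ : 'I_m * 'I_n => R) (fun _ => `[0, M]%classic)
  (fun _ => @segment_compact _ 0 M)).
Qed.

Lemma FF_cont : continuous FF.
Proof.
have E : FF = (fun x : PT =>
    \sum_i \sum_j kappa i j * x (i, j)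
    + \sum_j beta (c j) (Tt * \sum_i x (i, j))
    + eps * \sum_i \sum_j xlog (x (i, j)) (r i)).
  apply: funext => x; rewrite /FF /cost.
  congr (_ + _ + _ * _).
  - by apply: eq_bigr => i _; apply: eq_bigr => j _; rewrite mxE.
  - apply: eq_bigr => j _; rewrite mxE; congr (beta _ (_ * _)).
    by apply: eq_bigr => i _; rewrite mxE.
  - by apply: eq_bigr => i _; apply: eq_bigr => j _; rewrite mxE.
rewrite E => x.
eapply (@cadd R PT); first eapply (@cadd R PT).
- apply: cont_sum => i; apply: cont_sum => j.
  by apply: cmul; [exact: ccst | exact: projc].
- apply: cont_sum => j.
  have c1 : {for x, continuous (fun y : PT => Tt * \sum_i y (i, j))}.
    apply: cmul; first exact: ccst.
    by apply: cont_sum => i; exact: projc.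
  have c2 : {for Tt * \sum_i x (i, j), continuous (beta (c j))}.
    exact: beta_cont.
  have hh := continuous_comp c1 c2; exact hh.
- apply: cmul; first exact: ccst.
  apply: cont_sum => i; apply: cont_sum => j.
  have c2 : {for x (i, j), continuous (fun z => xlog z (r i))}.
    exact: xlog_cont.
  have c1 : {for x, continuous (fun y : PT => y (i, j))} by exact: projc.
  have hh := continuous_comp c1 c2; exact hh.
Qed.

Lemma SS_closed : closed SS.
Proof.
have -> : SS = (\bigcap_(k in setT) ((fun x : PT => x k) @^-1` [set y | 0 <= y]))
   `&` (\bigcap_(i in setT) ((fun x : PT => \sum_j x (i, j)) @^-1` [set r i])).
  apply/seteqP; split => x /=.
    by case=> h1 h2; split => k _ /=; [exact: h1 | exact: h2].
  by case=> h1 h2; split => k; [exact: h1 | exact: h2].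
apply: closedI; apply: closed_bigI => k _; apply: preimage_closed.
- by move=> y _; exact: projc.
- exact: closed_ge.
- by move=> y _; apply: cont_sum => j; exact: projc.
- exact: closed_eq.
Qed.

Lemma SS_box : SS `<=` [set x : PT | forall k, `[0, \sum_i r i]%classic (x k)].
Proof.
move=> x [h1 h2] [i j] /=; rewrite in_itv /= h1 /=.
apply: (le_trans (y := r i)).
  rewrite -h2 (bigD1 j) //= lerDl; apply: sumr_ge0 => j' _; exact: h1.
rewrite (bigD1 i) //= lerDl; apply: sumr_ge0 => i' _; exact: ltW.
Qed.

Lemma SS_ne : SS !=set0.
Proof.
exists (fun k => r k.1 / n%:R); split => [k|i] /=.
  by rewrite divr_ge0 // ltW.
rewrite sumr_const card_ord -mulr_natr; field.
by rewrite pnatr_eq0 -lt0n.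
Qed.

Lemma exists_opt : exists X q, optimal kappa c r Tt eps X q.
Proof.
have [x0 /set_mem [h1 h2] hmin] := compact_EVT_min SS_ne
  (subclosed_compact SS_closed (@boxc (\sum_i r i)) SS_box) (continuous_subspaceT (A:=SS) FF_cont).
have feas : forall X : 'M[R]_(m, n), (forall i j, 0 <= X i j) -> (forall i, \sum_j X i j = r i) ->
    feasible r Tt X (qrow X).
  move=> X hp hr; split => //; split => // j; rewrite mxE; field.
  by rewrite gt_eqF.
exists (mat x0), (qrow (mat x0)); split.
  by apply: feas => [i j|i]; rewrite ?mxE // -h2; apply: eq_bigr => j _; rewrite mxE.
move=> Y p [Yp [Yr Yc]].
have -> : p = qrow Y.
  apply/rowP => j; rewrite mxE Yc; field; by rewrite gt_eqF.
pose y : PT := fun k => Y k.1 k.2.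
have -> : Y = mat y by apply/matrixP => i j; rewrite mxE.
apply: hmin; apply: mem_set; split => [k|i]; first exact: Yp.
exact: Yr.
Qed.

End Exist.

Local Close Scope classical_set_scope.

Theorem proposition1 (R : realType) (m n : nat)
  (c : 'I_n -> R) (r : 'I_m -> R) (kappa : 'I_m -> 'I_n -> R) (T eps : R) :
  (1 <= m)%N -> (1 <= n)%N ->
  (forall j, 0 < c j) -> 0 < T -> 0 < eps ->
  (forall i, 0 < r i) -> (forall i j, 0 <= kappa i j) ->
  (exists (X : 'M[R]_(m, n)) (q : 'rV[R]_n), feasible r T X q) /\
  (exists (X : 'M[R]_(m, n)) (q : 'rV[R]_n),
     optimal kappa c r T eps X q /\
     forall (Y : 'M[R]_(m, n)) (p : 'rV[R]_n),
       optimal kappa c r T eps Y p -> Y = X /\ p = q).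
Proof.
move=> m1 n1 c0 T0 e0 r0 k0.
have [X [q oX]] := exists_opt kappa eps n1 c0 T0 r0.
split; first by exists X, q; case: oX.
exists X, q; split => // Y p oY.
exact: (opt_unique c0 T0 e0 r0 oY oX).
Qed.
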